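(* Let $X$ be a topological space, $(Z,d)$ a bounded metric space, and $F:X\to 2^Z$ a lower quasicontinuous set-valued mapping. Then $$A=\{x\in X:\ \forall\varepsilon>0\ \exists U\in\mathcal V_X(x),\ \mathrm{diam}(F(U))\le 2\,\mathrm{diam}(F(x))+\varepsilon\}$$ is a residual subset of $X$.
   Context: $2^Z$ is the set of nonempty subsets of $Z$; $\mathcal V_X(x)$ is the set of neighborhoods of $x$ in $X$; $F(U)=\bigcup_{x\in U}F(x)$; $\mathrm{diam}(W)=\sup\{d(u,v):u,v\in W\}$. $F$ is lower quasicontinuous if for each $x_0\in X$, each neighborhood $U$ of $x_0$ and each open $W\subset Z$ with $F(x_0)\cap W\neq\emptyset$, there is an open $O$ with $\emptyset\ne O\subset U$ and $F(x)\cap W\ne\emptyset$ for all $x\in O$. Residual means containing a countable intersection of dense open sets. *)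

(* Defs.v *)
From Stdlib Require Import Reals Classical ClassicalEpsilon.
Open Scope R_scope.

Record topology (X : Type) : Type := Topology {
  is_open : (X -> Prop) -> Prop;
  open_full : is_open (fun _ => True);
  open_inter : forall A B, is_open A -> is_open B -> is_open (fun x => A x /\ B x);
  open_union : forall (I : Type) (A : I -> X -> Prop),
      (forall i, is_open (A i)) -> is_open (fun x => exists i, A i x)
}.
Arguments is_open {X} t _.

Definition nbhd {X : Type} (T : topology X) (x : X) (U : X -> Prop) : Prop :=
  exists O, is_open T O /\ O x /\ (forall y, O y -> U y).

Definition dense {X : Type} (T : topology X) (G : X -> Prop) : Prop :=
  forall O, is_open T O -> (exists y, O y) -> exists y, O y /\ G y.

Definition residual {X : Type} (T : topology X) (A : X -> Prop) : Prop :=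
  exists G : nat -> X -> Prop,
    (forall n, is_open T (G n)) /\ (forall n, dense T (G n)) /\
    (forall x, (forall n, G n x) -> A x).

Definition is_metric {Z : Type} (d : Z -> Z -> R) : Prop :=
  (forall u v, 0 <= d u v) /\
  (forall u v, d u v = 0 <-> u = v) /\
  (forall u v, d u v = d v u) /\
  (forall u v w, d u w <= d u v + d v w).

Definition bounded_metric {Z : Type} (d : Z -> Z -> R) : Prop :=
  exists M, forall u v, d u v <= M.

Definition metric_open {Z : Type} (d : Z -> Z -> R) (W : Z -> Prop) : Prop :=
  forall z, W z -> exists r, 0 < r /\ forall w, d z w < r -> W w.

(* diam W = sup { d u v : u, v in W } (chosen via classical choice; for
   nonempty W in a bounded metric space this supremum exists). *)
Definition dist_set {Z : Type} (d : Z -> Z -> R) (W : Z -> Prop) : R -> Prop :=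
  fun r => exists u v, W u /\ W v /\ r = d u v.

Definition diam {Z : Type} (d : Z -> Z -> R) (W : Z -> Prop) : R :=
  epsilon (inhabits 0) (fun D => is_lub (dist_set d W) D).

Definition img {X Z : Type} (F : X -> Z -> Prop) (U : X -> Prop) : Z -> Prop :=
  fun z => exists x, U x /\ F x z.

Definition lower_quasicontinuous {X Z : Type} (T : topology X)
    (d : Z -> Z -> R) (F : X -> Z -> Prop) : Prop :=
  forall x0 U, nbhd T x0 U ->
  forall W, metric_open d W -> (exists z, F x0 z /\ W z) ->
  exists O, is_open T O /\ (exists y, O y) /\ (forall y, O y -> U y) /\
    (forall x, O x -> exists z, F x z /\ W z).

(* Main.v *)
Require Import Defs.
From Stdlib Require Import Reals Lra Classical ClassicalEpsilon.
Open Scope R_scope.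

Lemma diam_spec {Z : Type} (d : Z -> Z -> R) (W : Z -> Prop) :
  bounded_metric d -> (exists u, W u) -> is_lub (dist_set d W) (diam d W).
Proof.
  intros [M HM] [u Hu]. unfold diam. apply epsilon_spec.
  destruct (completeness (dist_set d W)) as [m Hm].
  - exists M. intros r [a [b [_ [_ ->]]]]. apply HM.
  - exists (d u u). exists u, u. auto.
  - exists m; exact Hm.
Qed.

Lemma ball_open {Z : Type} (d : Z -> Z -> R) (Hd : is_metric d) z r :
  metric_open d (fun w => d z w < r).
Proof.
  destruct Hd as [H0 [H1 [Hs Ht]]].
  intros w Hw. exists (r - d z w). split; [lra|].
  intros w' Hw'. pose proof (Ht z w w'). lra.
Qed.

Lemma dense_step (X Z : Type) (T : topology X) (d : Z -> Z -> R)
  (Hd : is_metric d) (Hb : bounded_metric d)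
  (F : X -> Z -> Prop) (HF : forall x, exists z, F x z)
  (Hlq : lower_quasicontinuous T d F) (e : R) (He : 0 < e)
  (V : X -> Prop) (HV : is_open T V) (y0 : X) (Hy0 : V y0) :
  exists O3, is_open T O3 /\ (exists y, O3 y) /\ (forall y, O3 y -> V y) /\
    forall x, O3 x -> diam d (img F O3) <= 2 * diam d (F x) + e.
Proof.
  pose proof Hd as [Hpos [Hid [Hs Ht]]].
  set (dl := e / 6).
  assert (Hdl : 0 < dl) by (unfold dl; lra).
  destruct (HF y0) as [z0 Hz0].
  destruct (Hlq y0 V (ex_intro _ V (conj HV (conj Hy0 (fun y h => h))))
     (fun w => d z0 w < dl) (ball_open d Hd z0 dl)) as
     [O2 [HO2 [[y2 Hy2] [HO2V HO2F]]]].
  { exists z0. split; auto. assert (d z0 z0 = 0) by (apply Hid; auto). lra. }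
  set (E := fun r => exists x u, O2 x /\ F x u /\ r = d z0 u).
  destruct Hb as [M HM].
  destruct (completeness E) as [Rr [HRub HRl]].
  { exists M. intros r [x [u [_ [_ ->]]]]. apply HM. }
  { destruct (HF y2) as [u Hu]. exists (d z0 u). exists y2, u. auto. }
  assert (Hex : exists x1 u1, O2 x1 /\ F x1 u1 /\ Rr - dl < d z0 u1).
  { destruct (classic (exists x1 u1, O2 x1 /\ F x1 u1 /\ Rr - dl < d z0 u1)) as [H|H];
      [exact H|].
    exfalso. assert (Rr <= Rr - dl); [|lra].
    apply HRl. intros r [x [u [Hx [Hu ->]]]].
    destruct (Rle_lt_dec (d z0 u) (Rr - dl)) as [h|h]; auto.
    exfalso; apply H; exists x, u; auto. }
  destruct Hex as [x1 [u1 [Hx1 [Hu1 Hlt]]]].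
  destruct (Hlq x1 O2 (ex_intro _ O2 (conj HO2 (conj Hx1 (fun y h => h))))
     (fun w => d u1 w < dl) (ball_open d Hd u1 dl)) as
     [O3 [HO3 [[y3 Hy3] [HO32 HO3F]]]].
  { exists u1. split; auto. assert (d u1 u1 = 0) by (apply Hid; auto). lra. }
  exists O3. split; [exact HO3|]. split; [exists y3; exact Hy3|].
  split; [intros y h; apply HO2V, HO32, h|].
  intros x Hx.
  assert (Hd1 : diam d (img F O3) <= 2 * Rr).
  { destruct (diam_spec d (img F O3) (ex_intro _ M HM)) as [_ Hl].
    { destruct (HF y3) as [u Hu]. exists u. exists y3. auto. }
    apply Hl. intros r [a [b [[xa [Ha1 Ha2]] [[xb [Hb1 Hb2]] ->]]]].
    assert (E (d z0 a)) as Ea by (exists xa, a; auto).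
    assert (E (d z0 b)) as Eb by (exists xb, b; auto).
    apply HRub in Ea. apply HRub in Eb.
    pose proof (Ht a z0 b). rewrite (Hs a z0) in *. lra. }
  destruct (HO2F x (HO32 x Hx)) as [w1 [Hw1 Hw1d]].
  destruct (HO3F x Hx) as [w2 [Hw2 Hw2d]].
  assert (Hg : d w1 w2 <= diam d (F x)).
  { destruct (diam_spec d (F x) (ex_intro _ M HM)) as [Hu _].
    { exists w1; auto. }
    apply Hu. exists w1, w2. auto. }
  pose proof (Ht z0 w1 u1). pose proof (Ht w1 w2 u1). rewrite (Hs w2 u1) in *.
  unfold dl in *. lra.
Qed.

Theorem lemma3p2 (X Z : Type) (T : topology X) (d : Z -> Z -> R)
  (Hd : is_metric d) (Hb : bounded_metric d)
  (F : X -> Z -> Prop) (HF : forall x, exists z, F x z)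
  (Hlq : lower_quasicontinuous T d F) :
  residual T (fun x => forall eps, 0 < eps ->
    exists U, nbhd T x U /\ diam d (img F U) <= 2 * diam d (F x) + eps).
Proof.
  set (en := fun n : nat => / (INR n + 1)).
  assert (Hen : forall n, 0 < en n).
  { intro n. unfold en. apply Rinv_0_lt_compat. pose proof (pos_INR n). lra. }
  set (An := fun n y => exists U, nbhd T y U /\
             diam d (img F U) <= 2 * diam d (F y) + en n).
  set (I := fun n => {O : X -> Prop | is_open T O /\ forall y, O y -> An n y}).
  exists (fun n x => exists i : I n, proj1_sig i x).
  split; [|split].
  - intro n. apply (@open_union X T (I n) (fun i => proj1_sig i)).
    intros i. destruct (proj2_sig i) as [HO _]. exact HO.
  - intros n V HV [y0 Hy0].
    destruct (dense_step X Z T d Hd Hb F HF Hlq (en n) (Hen n) V HV y0 Hy0)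
      as [O3 [HO3 [[y3 Hy3] [HO3V HO3d]]]].
    exists y3. split; [apply HO3V; exact Hy3|].
    assert (Hsub : is_open T O3 /\ forall y, O3 y -> An n y).
    { split; [exact HO3|]. intros y Hy. exists O3. split.
      - exists O3. split; [exact HO3|]. split; [exact Hy|]. auto.
      - apply HO3d; exact Hy. }
    exists (exist _ O3 Hsub). exact Hy3.
  - intros x Hx eps Heps.
    destruct (archimed_cor1 eps Heps) as [N [HN HN0]].
    destruct (Hx N) as [[O [HO HOA]] HOx].
    destruct (HOA x HOx) as [U [HU HUd]].
    exists U. split; [exact HU|].
    assert (en N <= eps); [|lra].
    unfold en. apply Rlt_le. eapply Rle_lt_trans; [|exact HN].
    apply Rinv_le_contravar.
    + apply lt_0_INR. exact HN0.
    + lra.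
Qed.
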